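(* For every environment $E$, every total preorder on $\Pi^E$ induced by a Regularised RL specification is also induced by some Function-from-Trajectory-Lotteries-to-Reals specification; i.e. $\mathrm{Ord}_{\mathrm{RRL}}(E)\subseteq\mathrm{Ord}_{\mathrm{FTLR}}(E)$. In particular, for every RRL specification and all $\pi_1,\pi_2\in\Pi^E$, $L_{\pi_1}=L_{\pi_2}$ implies $J_{\mathrm{RRL}}(\pi_1)=J_{\mathrm{RRL}}(\pi_2)$.
   Context: An environment is a tuple $E=(\mathcal S,\mathcal A,\mathcal T,\mathcal I)$ where $\mathcal S,\mathcal A$ are finite nonempty sets, $\mathcal T:\mathcal S\times\mathcal A\to\Delta(\mathcal S)$ and $\mathcal I\in\Delta(\mathcal S)$. A policy is a map $\pi:\mathcal S\to\Delta(\mathcal A)$ (stationary, possibly stochastic); $\Pi^E$ denotes the set of all policies. A trajectory $\xi=(s_0,a_0,s_1,a_1,\dots)$ is generated under $\pi$ by $s_0\sim\mathcal I$, $a_t\sim\pi(s_t)$, $s_{t+1}\sim\mathcal T(s_t,a_t)$; $\mathbb E^\pi_\xi$ denotes expectation under this distribution. An objective-specification formalism $X$ assigns to each environment $E$ a set of objective specifications, each inducing a total preorder $\succeq$ on $\Pi^E$; $\mathrm{Ord}_X(E)$ is the set of total preorders so induced. A specification defining a scalar $J:\Pi^E\to\mathbb R$ induces $\pi_1\succeq\pi_2\iff J(\pi_1)\ge J(\pi_2)$. Trajectory lottery: $L_{k,\pi}$ is the distribution of $(s_0,a_0,\dots,a_{k-1},s_k)$ under $\pi$, $L_\pi=(L_{0,\pi},L_{1,\pi},\dots)$,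 $L_{\Pi^E}=\{L_\pi:\pi\in\Pi^E\}$. RRL: specification $(\mathcal R,\alpha,F,\gamma)$ with $\mathcal R:\mathcal S\times\mathcal A\times\mathcal S\to\mathbb R$, $\alpha\in\mathbb R$, $F:\Delta(\mathcal A)\to\mathbb R$, $\gamma\in[0,1)$; $J_{\mathrm{RRL}}(\pi)=\mathbb E^\pi_\xi\big[\sum_{t=0}^\infty\gamma^t\big(\mathcal R(s_t,a_t,s_{t+1})-\alpha F(\pi(s_t))\big)\big]$. FTLR: specification $(f)$ with $f:L_{\Pi^E}\to\mathbb R$; $J(\pi)=f(L_\pi)$. *)

(* Defs.v *)
From HB Require Import structures.
From mathcomp Require Import all_boot all_order all_algebra.
From mathcomp Require Import all_classical all_reals all_analysis.
Set Implicit Arguments. Unset Strict Implicit. Unset Printing Implicit Defensive.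
Import Order.TTheory GRing.Theory Num.Theory numFieldNormedType.Exports.
Local Open Scope ring_scope.

Section RL.
Variable R : realType.

Definition is_dist (X : finType) (p : {ffun X -> R}) : bool :=
  [forall x, 0 <= p x] && (\sum_x p x == 1).
Definition dist (X : finType) := {p : {ffun X -> R} | is_dist p}.
Definition dprob (X : finType) (p : dist X) (x : X) : R := sval p x.

(* An environment E = (S, A, T, I) with S, A finite (nonemptiness is a
   hypothesis of the main theorem). *)
Record env (S A : finType) := Env {
  trans : S -> A -> dist S;
  init  : dist S
}.

Definition policy (S A : finType) := S -> dist A.

Variables (S A : finType) (E : env S A).

Fixpoint cont_prob (pi : policy S A) (s : S) (l : seq (A * S)) : R :=
  match l with
  | [::] => 1
  | (a, s') :: l' =>
      dprob (pi s) a * dprob (trans E s a) s' * cont_prob pi s' l'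
  end.

(* Trajectory lottery L_pi.  L_pi s0 l is the probability of the prefix
   (s0, a0, s1, ..., a_{k-1}, s_k) where l = [(a0,s1);...;(a_{k-1},s_k)];
   the restriction to sequences l of size k is L_{k,pi}. *)
Definition traj_lottery (pi : policy S A) : S -> seq (A * S) -> R :=
  fun s0 l => dprob (init E) s0 * cont_prob pi s0 l.

Definition lottery_set := {Lt : S -> seq (A * S) -> R |
                             exists pi : policy S A, Lt = traj_lottery pi}.

Definition lottery_of (pi : policy S A) : lottery_set :=
  exist _ (traj_lottery pi) (ex_intro _ pi erefl).

Record rrl_spec := RRL {
  rrl_R : S -> A -> S -> R;
  rrl_alpha : R;
  rrl_F : dist A -> R;
  rrl_gamma : R
}.

Definition reg_reward (sp : rrl_spec) (pi : policy S A) (st : S) (at_ : A)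
    (st1 : S) : R :=
  rrl_R sp st at_ st1 - rrl_alpha sp * rrl_F sp (pi st).

(* E^pi[ R(s_t,a_t,s_{t+1}) - alpha F(pi(s_t)) ], computed w.r.t. the
   distribution of the prefix (s_0,a_0,...,a_t,s_{t+1}). *)
Definition step_expectation (sp : rrl_spec) (pi : policy S A) (t : nat) : R :=
  \sum_(s0 : S) \sum_(l : (t.+1).-tuple (A * S))
    traj_lottery pi s0 l *
    reg_reward sp pi (last s0 (map snd (take t l)))
                     (tnth l ord_max).1 (tnth l ord_max).2.

Definition J_RRL (sp : rrl_spec) (pi : policy S A) : R :=
  limn (series (fun t : nat => rrl_gamma sp ^+ t * step_expectation sp pi t)).

End RL.

(* Main.v *)
Require Import Defs.
From HB Require Import structures.
From mathcomp Require Import all_boot all_order all_algebra.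
From mathcomp Require Import all_classical all_reals all_analysis.
Import Order.TTheory GRing.Theory Num.Theory.
Local Open Scope ring_scope.

Section Aux.
Variables (R : realType) (S A : finType) (E : env R S A).

Lemma cont_cat (pi : policy R S A) (p q : seq (A * S)) (s : S) :
  cont_prob E pi s (p ++ q) =
  cont_prob E pi s p * cont_prob E pi (last s (map snd p)) q.
Proof.
elim: p s => [|[a s'] p IH] s /=; first by rewrite mul1r.
by rewrite IH mulrA.
Qed.

Lemma dist_sum1 (X : finType) (d : dist R X) : \sum_x dprob d x = 1.
Proof. rewrite /dprob; have /andP [_ /eqP //] := svalP d. Qed.

Lemma marg (pi : policy R S A) (s : S) (p : seq (A * S)) (a : A) :
  \sum_s' cont_prob E pi s (p ++ [:: (a, s')]) =
  cont_prob E pi s p * dprob (pi (last s (map snd p))) a.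
Proof.
under eq_bigr => s' _ do rewrite cont_cat /= mulr1.
rewrite -mulr_sumr; congr (_ * _).
by rewrite -mulr_sumr dist_sum1 mulr1.
Qed.

Lemma pol_eq (pi1 pi2 : policy R S A) :
  traj_lottery E pi1 = traj_lottery E pi2 ->
  forall s0 p, traj_lottery E pi1 s0 p != 0 ->
  pi1 (last s0 (map snd p)) = pi2 (last s0 (map snd p)).
Proof.
move=> H s0 p Hnz.
have Heq : forall a, dprob (pi1 (last s0 (map snd p))) a =
                     dprob (pi2 (last s0 (map snd p))) a.
  move=> a.
  have h1 : forall pi : policy R S A, \sum_s' traj_lottery E pi s0 (p ++ [:: (a, s')])
     = traj_lottery E pi s0 p * dprob (pi (last s0 (map snd p))) a.
    move=> pi; rewrite /traj_lottery -mulr_sumr marg mulrA //.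
  have := h1 pi1; rewrite H h1 -H => /eqP.
  by rewrite (inj_eq (mulfI Hnz)) => /eqP.
apply/val_inj/ffunP => a; exact: Heq.
Qed.

Lemma step_eq (sp : rrl_spec R S A) (pi1 pi2 : policy R S A) :
  traj_lottery E pi1 = traj_lottery E pi2 ->
  forall t, step_expectation E sp pi1 t = step_expectation E sp pi2 t.
Proof.
move=> H t; rewrite /step_expectation.
apply: eq_bigr => s0 _; apply: eq_bigr => l _.
have [Z|NZ] := eqVneq (traj_lottery E pi1 s0 l) 0.
  by rewrite -H Z !mul0r.
rewrite -H; congr (_ * _).
have NZ' : traj_lottery E pi1 s0 (take t l) != 0.
  apply: contra NZ => /eqP Z.
  by rewrite /traj_lottery -(cat_take_drop t l) cont_cat mulrA
    -/(traj_lottery E pi1 s0 (take t l)) Z mul0r.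
by rewrite /reg_reward (pol_eq pi1 pi2 H _ _ NZ').
Qed.

Lemma J_eq (sp : rrl_spec R S A) (pi1 pi2 : policy R S A) :
  traj_lottery E pi1 = traj_lottery E pi2 ->
  J_RRL E sp pi1 = J_RRL E sp pi2.
Proof.
move=> H; rewrite /J_RRL.
have -> : (fun t : nat => rrl_gamma sp ^+ t * step_expectation E sp pi1 t) =
          (fun t : nat => rrl_gamma sp ^+ t * step_expectation E sp pi2 t).
  by apply: funext => t; rewrite (step_eq sp pi1 pi2 H).
by [].
Qed.

End Aux.

Theorem mainTheorem7 (R : realType) (S A : finType) (E : env R S A)
    (hS : (0 < #|S|)%N) (hA : (0 < #|A|)%N) (sp : rrl_spec R S A)
    (hg0 : 0 <= rrl_gamma sp) (hg1 : rrl_gamma sp < 1) :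
  (exists f : lottery_set E -> R,
     forall pi1 pi2 : policy R S A,
       (J_RRL E sp pi1 >= J_RRL E sp pi2) <->
       (f (lottery_of E pi1) >= f (lottery_of E pi2)))
  /\
  (forall pi1 pi2 : policy R S A,
     traj_lottery E pi1 = traj_lottery E pi2 ->
     J_RRL E sp pi1 = J_RRL E sp pi2).
Proof.
split; last by move=> pi1 pi2; exact: J_eq.
pose pick := fun Lt : lottery_set E =>
  proj1_sig (@cid (policy R S A)
    (fun pi => proj1_sig Lt = traj_lottery E pi) (proj2_sig Lt)).
exists (fun Lt => J_RRL E sp (pick Lt)).
have K : forall pi, J_RRL E sp (pick (lottery_of E pi)) = J_RRL E sp pi.
  move=> pi; rewrite /pick.
  case: (cid _) => pi' /= Hp.
  by apply: J_eq; rewrite -Hp.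
by move=> pi1 pi2; rewrite !K.
Qed.
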